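(* Fix any $d,r\in\mathbb{N}$. For every $m\in\mathbb{N}$ there exists $m'=m'(d,r,m)$ such that every graph $G$ with $(r,m')$-rank more than $d$ contains $T_{d,m}$ as an $r$-shallow topological minor.
   Context: $T_{d,m}$ is the rooted tree of depth $d$ (all leaf-to-root paths have $d$ edges) in which every non-leaf vertex has exactly $m$ children. $H$ is an $r$-shallow topological minor of $G$ if $G$ has a subgraph isomorphic to a graph obtained from $H$ by replacing each edge by a path with at most $r$ internal vertices (paths internally disjoint). $N_r^G(v)$ is the closed $r$-neighborhood of $v$; $G-S$ is the subgraph induced on $V(G)\setminus S$. The $(r,m)$-rank of vertices of $G$ (values in $\mathbb{N}\cup\{\infty\}$, with $\infty$ larger than every integer) is defined by: initially every vertex has rank $\infty$; in rounds $i=1,2,\dots$, every vertex $v$ currently of rank $\infty$ receives rank $i$ if there exists $S\subseteq V(G)\setminus\{v\}$ with $|S|\le m$ such that every vertex of $N_r^{G-S}(v)\setminus\{v\}$ received a finite rank in rounds $1,\dots,i-1$; the procedure stops when all ranks are finite or a round assigns no new rank. The $(r,m)$-rank of $G$ is the maximum $(r,m)$-rank of a vertex of $G$. *)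

(* Defs.v *)
(* Finite simple graphs are given as a finType V with a
   symmetric irreflexive boolean relation e. *)
From mathcomp Require Import all_boot.
Set Implicit Arguments. Unset Strict Implicit. Unset Printing Implicit Defensive.

Section Graphs.
Variables (V : finType) (e : rel V).

(* [ballS S v k] = closed k-neighbourhood of v in G - S (empty if v \in S). *)
Fixpoint ballS (S : {set V}) (v : V) (k : nat) : {set V} :=
  match k with
  | 0 => if v \in S then set0 else [set v]
  | k'.+1 => let B := ballS S v k' in
             B :|: [set w | (w \notin S) && [exists u in B, e u w]]
  end.

(* [ranked r m k] = set of vertices whose (r,m)-rank is finite and <= k,
   i.e. which received a rank in one of the rounds 1..k. *)
Fixpoint ranked (r m : nat) (k : nat) : {set V} :=
  match k with
  | 0 => set0
  | k'.+1 => let R := ranked r m k' in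
      R :|: [set v | [exists S : {set V},
                [&& #|S| <= m, v \notin S & (ballS S v r :\ v) \subset R]]]
  end.

(* The (r,m)-rank of G is more than d: some vertex has rank > d (possibly oo). *)
Definition rank_gt (r m d : nat) : Prop := exists v : V, v \notin ranked r m d.

End Graphs.

(* H is an r-shallow topological minor of G: branch vertices phi, and for each
   edge xy of H a path phi x - P x y - phi y in G with at most r internal
   vertices, internal vertices distinct and outside the branch set, and paths
   of different edges internally disjoint. *)
Definition shallow_topminor (VH : finType) (eH : rel VH)
    (VG : finType) (eG : rel VG) (r : nat) : Prop :=
  exists (phi : VH -> VG) (P : VH -> VH -> seq VG),
    [/\ injective phi,
        (forall x y, eH x y ->
           [/\ path eG (phi x) (rcons (P x y) (phi y)),
               size (P x y) <= r,
               uniq (P x y) &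
               forall z u, z \in P x y -> z != phi u]) &
        (forall x y x' y', eH x y -> eH x' y' ->
           ~~ (((x == x') && (y == y')) || ((x == y') && (y == x'))) ->
           forall z, z \in P x y -> z \notin P x' y')].

(* The rooted tree T_{d,m}: vertices are words over 'I_m of length <= d
   (the root is the empty word); a word's children are its one-letter
   extensions. *)
Definition tree_vertex (d m : nat) := {k : 'I_d.+1 & k.-tuple 'I_m}.

Definition tree_parent (d m : nat) (x y : tree_vertex d m) : bool :=
  ((tag y : nat) == (tag x).+1) && (val (tagged x) == take (tag x) (val (tagged y))).

Definition tree_edge (d m : nat) : rel (tree_vertex d m) :=
  fun x y => tree_parent x y || tree_parent y x.

(* Main.v *)
Require Import Defs.
From mathcomp Require Import all_boot zify.
Set Implicit Arguments. Unset Strict Implicit. Unset Printing Implicit Defensive.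

Section Aux.
Variables (V : finType) (e : rel V).

Lemma ball_walk S v k u : u \in ballS e S v k ->
  exists p, [/\ path e v p, last v p = u, size p <= k & all (fun x => x \notin S) (v :: p)].
Proof.
elim: k u => [|k IH] u /=.
  case: ifP => vS; first by rewrite inE.
  rewrite inE => /eqP ->; exists [::]; split => //=; by rewrite vS.
rewrite in_setU => /orP [/IH [p [P1 P2 P3 P4]]|].
  by exists p; split => //; apply: leqW.
rewrite inE => /andP [uS /existsP [x /andP [xB exu]]].
have [p [P1 P2 P3 P4]] := IH _ xB.
exists (rcons p u); split.
- by rewrite rcons_path P1 P2.
- by rewrite last_rcons.
- by rewrite size_rcons.
- by move: P4 => /= /andP [h1 h2]; rewrite all_rcons uS h1 h2.
Qed.

Lemma simple_walk S v k u : u \in ballS e S v k -> u != v ->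
  exists q, [/\ path e v (rcons q u), size q < k, uniq (v :: rcons q u)
     & forall x, x \in rcons q u -> x \notin S].
Proof.
move=> /ball_walk [p [P1 P2 P3 P4]] uv.
move: P2; case: (shortenP P1) => p' Q1 Q2 Q3 Hl.
case/lastP: p' Q1 Q2 Q3 Hl => [|q y] Q1 Q2 Q3 Hl.
  by move: uv; rewrite -Hl /= eqxx.
rewrite last_rcons in Hl; subst y.
exists q; split => //.
- have := uniq_leq_size (andP Q2).2 Q3 => /= h.
  by rewrite -ltnS -(size_rcons q u); apply: leq_trans h P3.
- move=> x /Q3 xp; move/allP: P4; apply; by rewrite inE xp orbT.
Qed.
End Aux.

Lemma flat_disj (T U : eqType) (f : T -> seq U) s w w' z :
  uniq s -> uniq (flatten (map f s)) -> w \in s -> w' \in s -> w != w' ->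
  z \in f w -> z \notin f w'.
Proof.
elim: s => //= a s IH /andP [aS us]; rewrite cat_uniq => /and3P [ua hn uf].
rewrite !inE => /orP [/eqP ->|ws] /orP [/eqP ->|w's]; rewrite ?eqxx //.
- move=> _ zf; apply: contra hn => zf'; apply/hasP; exists z => //.
  by apply/flattenP; exists (f w') => //; apply: map_f.
- move=> _ zf; apply/negP => zf'; move/negP: hn; apply; apply/hasP; exists z => //.
  by apply/flattenP; exists (f w) => //; apply: map_f.
- exact: IH.
Qed.

Lemma flat_uniq (T U : eqType) (f : T -> seq U) s w :
  uniq (flatten (map f s)) -> w \in s -> uniq (f w).
Proof.
elim: s => //= a s IH; rewrite cat_uniq => /and3P [ua _ uf].
rewrite inE => /orP [/eqP ->|ws] //; exact: IH.
Qed.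

Definition parentw (T : Type) (w : seq T) := take (size w).-1 w.

Fixpoint allwords (m k : nat) : seq (seq 'I_m) :=
  if k is k'.+1 then [::] :: [seq i :: w | i <- enum 'I_m, w <- allwords m k']
  else [:: [::]].

Lemma allwords_mem m k w : size w <= k -> w \in allwords m k.
Proof.
elim: k w => [|k IH] [|i w] //=.
rewrite ltnS => /IH h; rewrite inE; apply/orP; right.
by apply: (allpairs_f (fun i w => i :: w)) => //; rewrite mem_enum.
Qed.

Lemma path_rev_sym (T : eqType) (e : rel T) a q b : symmetric e ->
  path e a (rcons q b) -> path e b (rcons (rev q) a).
Proof.
move=> sym h; have := rev_path e a (rcons q b).
rewrite last_rcons belast_rcons rev_cons => ->.
by rewrite (@eq_path _ _ e) // => x y /=; rewrite sym.
Qed.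

Definition word d m (x : tree_vertex d m) : seq 'I_m := val (tagged x).

Lemma size_word d m (x : tree_vertex d m) : size (word x) = tag x.
Proof. by rewrite /word size_tuple. Qed.

Lemma word_inj d m : injective (@word d m).
Proof.
case=> k1 t1 [k2 t2] /= H.
have Ek : k1 = k2.
  apply: val_inj; rewrite /= -(size_tuple t1) -(size_tuple t2); exact: (congr1 size H).
subst k2; congr existT; exact: val_inj.
Qed.

Lemma tree_parent_word d m (x y : tree_vertex d m) : tree_parent x y ->
  word x = parentw (word y) /\ word y != [::].
Proof.
rewrite /tree_parent => /andP [/eqP ht /eqP hw].
rewrite /parentw size_word ht /=; split; first exact: hw.
by rewrite -size_eq0 size_word ht.
Qed.

Lemma parent_uniq d m (a b c : tree_vertex d m) :
  tree_parent a c -> tree_parent b c -> a = b.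
Proof.
move=> /tree_parent_word [h1 _] /tree_parent_word [h2 _].
by apply: word_inj; rewrite h1 h2.
Qed.

Section Build.
Variables (V : finType) (e : rel V) (d r m : nat).
Let M := (r.+1 * size (allwords m d))%N.

Definition flatL (phi : seq 'I_m -> V) (Q : seq 'I_m -> seq V) ws :=
  flatten (map (fun w => phi w :: Q w) ws).

Record Inv (ws : seq (seq 'I_m)) (phi : seq 'I_m -> V) (Q : seq 'I_m -> seq V) : Prop := {
  i_uniq : uniq ws;
  i_root : [::] \in ws;
  i_size : forall w, w \in ws -> size w <= d;
  i_par : forall w, w \in ws -> w != [::] -> parentw w \in ws /\
           path e (phi (parentw w)) (rcons (Q w) (phi w));
  i_Q : forall w, w \in ws -> size (Q w) <= r;
  i_rank : forall w, w \in ws -> phi w \notin ranked e r M (d - size w);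
  i_flat : uniq (flatL phi Q ws);
  i_fsize : size (flatL phi Q ws) <= r.+1 * size ws }.

Lemma missing (ws : seq (seq 'I_m)) (w : seq 'I_m) : [::] \in ws -> w \notin ws -> size w <= d ->
  exists w', [/\ w' \notin ws, size w' <= d, w' != [::] & parentw w' \in ws].
Proof.
move=> r0; elim: (size w) {-2}w (erefl (size w)) => [|k IH] {}w sw wn wd.
  by case: w sw wn wd => //; rewrite r0.
have wne : w != [::] by rewrite -size_eq0 sw.
case pw: (parentw w \in ws); first by exists w; split => //; rewrite pw.
apply: (IH (parentw w)); rewrite ?pw //.
  by rewrite /parentw size_takel ?leq_pred // sw.
by rewrite /parentw size_takel ?leq_pred //; apply: leq_trans wd; apply: leq_pred.
Qed.

Lemma size_ws (ws : seq (seq 'I_m)) : uniq ws -> (forall w, w \in ws -> size w <= d) -> size ws <= size (allwords m d).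
Proof.
move=> u h; apply: uniq_leq_size => // w /h; exact: allwords_mem.
Qed.

Lemma step ws phi Q w0 : Inv ws phi Q -> w0 \notin ws -> size w0 <= d ->
  exists ws' phi' Q', Inv ws' phi' Q' /\ size ws' = (size ws).+1.
Proof.
move=> I w0n w0d.
have [w [wn wd wne pw]] := missing (i_root I) w0n w0d.
set p := parentw w.
set v := phi p.
have sw1 : 0 < size w by rewrite lt0n size_eq0.
have sp : size p = (size w).-1 by rewrite /p /parentw size_takel // leq_pred.
have rv := i_rank I pw.
have Ed : d - size p = (d - size w).+1 by rewrite sp; lia.
rewrite Ed in rv.
set L := flatL phi Q ws.
set S := [set x in L] :\ v.
have cS : #|S| <= M.
  apply: leq_trans (subset_leq_card (subsetDl _ _)) _.
  rewrite cardsE; apply: leq_trans (card_size _) _.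
  apply: leq_trans (i_fsize I) _; rewrite leq_mul2l; apply/orP; right.
  exact: size_ws (i_uniq I) (i_size I).
have vS : v \notin S by rewrite in_setD1 eqxx.
move: rv; rewrite /= in_setU negb_or => /andP [_]; rewrite inE.
move/existsPn => /(_ S); rewrite cS vS /= => /subsetPn [u].
rewrite in_setD1 => /andP [uv ub] ur.
have [q [qp qs qu qS]] := simple_walk ub uv.
have qL : forall x, x \in u :: q -> x \notin L.
  move=> x xq; have xr : x \in rcons q u by rewrite mem_rcons.
  have := qS _ xr; rewrite in_setD1 inE negb_and negbK => /orP [/eqP xv|//].
  move: qu => /= /andP [hv _]; by move: hv; rewrite -/p -/v -xv xr.
pose phi' x := if x == w then u else phi x.
pose Q' x := if x == w then q else Q x.
have eqL : flatL phi' Q' ws = L.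
  rewrite /flatL /L /flatL; congr flatten; apply/eq_in_map => x xw.
  have xne : x == w = false by apply/negbTE; apply: contraNneq wn => <-.
  by rewrite /phi' /Q' xne.
have pne : (p == w) = false by apply/negbTE; apply: contraNneq wn => <-.
have Hflat : flatL phi' Q' (w :: ws) = (u :: q) ++ L.
  by rewrite -eqL /flatL /= /phi' /Q' eqxx.
exists (w :: ws), phi', Q'; split => //; split.
- by rewrite /= wn (i_uniq I).
- by rewrite inE (i_root I) orbT.
- by move=> x; rewrite inE => /orP [/eqP ->|/(i_size I)].
- move=> x; rewrite inE => /orP [/eqP ->|xw] xne.
    by rewrite inE pw orbT /phi' /Q' eqxx -/p pne; split.
  have xne' : (x == w) = false by apply/negbTE; apply: contraNneq wn => <-.
  have [h1 h2] := i_par I xw xne.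
  have pxne : (parentw x == w) = false by apply/negbTE; apply: contraNneq wn => <-.
  by rewrite inE h1 orbT /phi' /Q' xne' pxne.
- move=> x; rewrite inE /Q' => /orP [/eqP ->|xw]; first by rewrite eqxx; apply: ltnW.
  by case: ifP => _; [apply: ltnW | apply: (i_Q I)].
- move=> x; rewrite inE /phi' => /orP [/eqP ->|xw]; first by rewrite eqxx.
  have xne' : (x == w) = false by apply/negbTE; apply: contraNneq wn => <-.
  by rewrite xne'; apply: (i_rank I).
- rewrite Hflat cat_uniq (i_flat I) andbT; apply/andP; split.
    by move: qu => /= /andP [_]; rewrite rcons_uniq.
  by apply/hasPn => x xL; apply/negP => /qL; rewrite xL.
- rewrite Hflat size_cat /=; have := i_fsize I; rewrite -/L => h.
  by rewrite mulnS; apply: leq_add => //; apply: ltnW.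
Qed.

Lemma grow v0 : v0 \notin ranked e r M d -> forall n, exists ws phi Q,
  Inv ws phi Q /\ (n <= size ws \/ forall w, size w <= d -> w \in ws).
Proof.
move=> v0r; elim=> [|n [ws [phi [Q [I H]]]]].
  exists [:: [::]], (fun _ => v0), (fun _ => [::]); split; last by left.
  split => //=.
  - by move=> w; rewrite inE => /eqP ->.
  - by move=> w; rewrite inE => /eqP ->.
  - by move=> w; rewrite inE => /eqP -> /=; rewrite subn0.
case: H => [H|H]; last by exists ws, phi, Q; split => //; right.
case h: (all (fun w => (size w <= d) ==> (w \in ws)) (allwords m d)).
  exists ws, phi, Q; split => //; right => w wd.
  by move/allP: h => /(_ w (allwords_mem wd)); rewrite wd.
move/negbT: h => /allPn [w0 _]; rewrite negb_imply => /andP [w0d w0n].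
have [ws' [phi' [Q' [I' E]]]] := step I w0n w0d.
by exists ws', phi', Q'; split => //; left; rewrite E.
Qed.

Lemma complete_build v0 : v0 \notin ranked e r M d -> exists ws phi Q,
  Inv ws phi Q /\ forall w, size w <= d -> w \in ws.
Proof.
move=> v0r; have [ws [phi [Q [I [H|H]]]]] := grow v0r (size (allwords m d)).+1.
  by have := size_ws (i_uniq I) (i_size I); rewrite leqNgt H.
by exists ws, phi, Q.
Qed.
End Build.
Unset Implicit Arguments.

Theorem lemma3p5 (d r : nat) :
  forall m : nat, exists m' : nat,
    forall (V : finType) (e : rel V),
      symmetric e -> irreflexive e ->
      rank_gt e r m' d ->
      shallow_topminor (@tree_edge d m) e r.
Proof.
move=> m; exists (r.+1 * size (allwords m d)) => V e sym irr [v0 v0r].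
have [ws [phi [Q [I C]]]] := complete_build v0r.
have inw : forall x : tree_vertex d m, word x \in ws.
  by move=> x; apply: C; rewrite size_word -ltnS; exact: ltn_ord.
have Qf : forall c : tree_vertex d m, [/\ uniq (Q (word c)), size (Q (word c)) <= r &
    forall z (u : tree_vertex d m), z \in Q (word c) -> z != phi (word u)].
  move=> c; have /= /andP [pn uq] := flat_uniq (i_flat I) (inw c).
  split => //; first exact: (i_Q I (inw c)).
  move=> z u zq; case E: (word u == word c).
    by move/eqP: E => ->; apply: contraNneq pn => <-.
  have ne : word c != word u by rewrite eq_sym E.
  have zc : z \in phi (word c) :: Q (word c) by rewrite inE zq orbT.
  by have := flat_disj (i_uniq I) (i_flat I) (inw c) (inw u) ne zc; rewrite inE negb_or => /andP [].
exists (fun x => phi (word x)), (fun x y => if tree_parent x y then Q (word y) else rev (Q (word x))).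
split.
- move=> x y E; apply: word_inj; apply/eqP; apply/negPn/negP => ne.
  have zc : phi (word x) \in phi (word x) :: Q (word x) by rewrite inE eqxx.
  by have := flat_disj (i_uniq I) (i_flat I) (inw x) (inw y) ne zc; rewrite E inE eqxx.
- move=> x y; rewrite /tree_edge; case: ifP => pxy /=.
    move=> _; have [hw hne] := tree_parent_word pxy.
    have [_ hp] := i_par I (inw y) hne; rewrite hw.
    by have [u1 u2 u3] := Qf y; split.
  move=> pyx; have [hw hne] := tree_parent_word pyx.
  have [_ hp] := i_par I (inw x) hne; rewrite -hw in hp.
  have [u1 u2 u3] := Qf x; split.
  + exact: path_rev_sym sym hp.
  + by rewrite size_rev.
  + by rewrite rev_uniq.
  + by move=> z u; rewrite mem_rev; apply: u3.
- move=> x y x' y' exy ex'y' neq z.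
  have key : forall c c' : tree_vertex d m, c != c' -> z \in Q (word c) -> z \notin Q (word c').
    move=> c c' ne zc.
    have ne' : word c != word c' by rewrite (inj_eq (@word_inj d m)).
    have zc' : z \in phi (word c) :: Q (word c) by rewrite inE zc orbT.
    by have := flat_disj (i_uniq I) (i_flat I) (inw c) (inw c') ne' zc'; rewrite inE negb_or => /andP [].
  move: exy ex'y'; rewrite /tree_edge.
  case: ifP => pxy /= pyx; case: ifP => px'y' /= py'x'; rewrite ?mem_rev; apply: key; apply/eqP => E; subst.
  + by move: neq; rewrite (parent_uniq pxy px'y') !eqxx.
  + by move: neq; rewrite (parent_uniq pxy py'x') !eqxx orbT.
  + by move: neq; rewrite (parent_uniq pyx px'y') !eqxx orbT.
  + by move: neq; rewrite (parent_uniq pyx py'x') !eqxx.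
Qed.
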